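(* The magmatic $\mathbb K$-algebra $\mathrm{Mag}$ has a $\Bbbk$-basis consisting of the trivial monomials $1_n$ ($n\in\mathbb N$) and the monomials $\partial^m_{i_m}\cdots\partial^n_{i_n}$ with $m\ge n\ge0$, $i_m\ge\cdots\ge i_n$, and $0\le i_j\le j$ for all $j=n,\dots,m$.
   Context: Let $\Bbbk$ be a field and $\mathbb{K}=\bigoplus_{n\in\mathbb N}\Bbbk1_n$ with $1_n1_m=\delta_{nm}1_n$. A $\mathbb K$-algebra is the categorical algebra of a small $\Bbbk$-linear category with object set $\mathbb N$. $T(\partial)$ is the free $\mathbb K$-algebra on generators $\partial^n_j$ ($n\ge0$, $0\le j\le n$), where $\partial^n_j$ is a morphism $n\to n+1$ (so $1_{n+1}\partial^n_j=\partial^n_j1_n=\partial^n_j$, and products of generators with mismatched degrees are $0$; nonzero monomials have the form $\partial^m_{i_m}\partial^{m-1}_{i_{m-1}}\cdots\partial^n_{i_n}$). $\mathrm{Mag}=T(\partial)/I_{\mathrm{Mag}}$ with $I_{\mathrm{Mag}}$ the two-sided ideal generated by $\partial^{n+1}_i\partial^n_j-\partial^{n+1}_{j+1}\partial^n_i$ for $0\le i<j\le n$, $n\ge0$. *)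

(* Defs.v *)
From HB Require Import structures.
From mathcomp Require Import all_boot all_algebra.
From mathcomp Require Import finmap monalg.

Set Implicit Arguments.
Unset Strict Implicit.
Unset Printing Implicit Defensive.

Import GRing.Theory.
Local Open Scope ring_scope.

(* A monomial is encoded by a pair (n, w) with w = [:: i_n; i_(n+1); ...; i_m]
   and stands for  partial^m_{i_m} ... partial^(n+1)_{i_(n+1)} partial^n_{i_n},
   a morphism n -> m+1 (i.e. n -> n + size w).  The generator at position p
   of w is partial^(n+p)_{w_p}, so it is required that w_p <= n + p.
   The pair (n, [::]) is the trivial monomial 1_n.                      *)

Definition valid_mon (x : nat * seq nat) : bool :=
  all (fun p => nth 0%N x.2 p <= x.1 + p)%N (iota 0 (size x.2)).

Definition mon : Type := {x : nat * seq nat | valid_mon x}.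

Definition mon_src (u : mon) : nat := (val u).1.
Definition mon_word (u : mon) : seq nat := (val u).2.
Definition mon_tgt (u : mon) : nat := (mon_src u + size (mon_word u))%N.

(* The free K-algebra T(partial), as a k-vector space: finitely supported
   k-linear combinations of monomials (the monomials form a k-basis). *)
Definition Tpar (k : fieldType) : Type := {malg k[mon]}.

(* The element of T(partial) given by the word (n, w) if it is a valid
   monomial, and 0 otherwise (only used on valid words). *)
Definition mono (k : fieldType) (n : nat) (w : seq nat) : Tpar k :=
  match @insub _ valid_mon _ (n, w) with
  | Some u => << (u : mon) >>
  | None => 0
  end.

Definition one_ (k : fieldType) (n : nat) : Tpar k := mono k n [::].
Definition gen (k : fieldType) (n j : nat) : Tpar k := mono k n [:: j].

(* Product of monomials in the categorical algebra: u * v = u o v,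
   nonzero only when the source of u is the target of v. *)
Definition mon_mul (k : fieldType) (u v : mon) : Tpar k :=
  if mon_src u == mon_tgt v
  then mono k (mon_src v) (mon_word v ++ mon_word u)
  else 0.

Definition Tmul (k : fieldType) (p q : Tpar k) : Tpar k :=
  \sum_(u <- msupp p) \sum_(v <- msupp q) (p@_u * q@_v) *: mon_mul k u v.

(* The generating relations of I_Mag:
   partial^(n+1)_i partial^n_j - partial^(n+1)_(j+1) partial^n_i,
   for 0 <= i < j <= n. *)
Definition mag_rel (k : fieldType) (n i j : nat) : Tpar k :=
  mono k n [:: j; i] - mono k n [:: i; j.+1].

Inductive in_IMag (k : fieldType) : Tpar k -> Prop :=
  | IMag_gen n i j : (i < j)%N -> (j <= n)%N -> in_IMag (mag_rel k n i j)
  | IMag_zero : in_IMag 0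
  | IMag_add p q : in_IMag p -> in_IMag q -> in_IMag (p + q)
  | IMag_scale (c : k) p : in_IMag p -> in_IMag (c *: p)
  | IMag_mull (a p : Tpar k) : in_IMag p -> in_IMag (Tmul a p)
  | IMag_mulr (p a : Tpar k) : in_IMag p -> in_IMag (Tmul p a).

(* Normal monomials: the trivial ones 1_n (empty word) and
   partial^m_{i_m} ... partial^n_{i_n} with i_m >= ... >= i_n, i.e. the
   word [:: i_n; ...; i_m] is nondecreasing. *)
Definition normal_mon (u : mon) : bool := sorted leq (mon_word u).

Definition Mag_spanned_by_normal (k : fieldType) : Prop :=
  forall p : Tpar k, exists q : Tpar k,
    (forall u, u \in msupp q -> normal_mon u) /\ in_IMag (p - q).

Definition normal_indep_mod_IMag (k : fieldType) : Prop :=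
  forall q : Tpar k,
    (forall u, u \in msupp q -> normal_mon u) -> in_IMag q -> q = 0.

(* Main.v *)
Require Import Defs.
From HB Require Import structures.
From mathcomp Require Import all_boot all_algebra.
From mathcomp Require Import finmap monalg.
From mathcomp Require Import zify.
Set Implicit Arguments.
Unset Strict Implicit.
Unset Printing Implicit Defensive.
Import GRing.Theory.

Definition ins (s : seq nat) (x : nat) : seq nat :=
  [seq y <- s | y <= x] ++ x :: [seq y.+1 | y <- s & x < y].
Definition nf (w : seq nat) : seq nat := foldl ins [::] w.

Lemma sorted_rcons_all (s : seq nat) y :
  sorted leq (rcons s y) = sorted leq s && all (fun z => z <= y) s.
Proof.
rewrite -(rev_sorted (fun a b => b <= a)) rev_rcons /= path_sortedE; last first.
  by move=> a b c /= h1 h2; apply: leq_trans h2 h1.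
by rewrite rev_sorted all_rev andbC.
Qed.

Lemma ins_all s x : all (fun z => z <= x) s -> ins s x = rcons s x.
Proof.
move=> h; rewrite /ins (all_filterP h).
have -> : [seq y <- s | x < y] = [::].
  by elim: s h => //= y s IH /andP[h1 h2]; rewrite ltnNge h1 /= IH.
by rewrite cats1.
Qed.

Lemma ins_rcons_gt s y x : x < y -> ins (rcons s y) x = rcons (ins s x) y.+1.
Proof.
move=> h; rewrite /ins !filter_rcons /= leqNgt h /= map_rcons.
by rewrite rcons_cat rcons_cons.
Qed.

Lemma size_ins s x : size (ins s x) = (size s).+1.
Proof.
rewrite /ins size_cat /= size_map; elim: s => //= y s IH.
case: (leqP y x) => h /=; lia.
Qed.



Lemma ins_sorted s x : sorted leq s -> sorted leq (ins s x).
Proof.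
elim/last_ind: s => [|s y IH] //.
rewrite sorted_rcons_all => /andP[ss ay].
case: (leqP y x) => h.
  have ay' : all (fun z => z <= x) s by apply: sub_all ay => z /= hz; lia.
  rewrite ins_all; first by rewrite !sorted_rcons_all ss ay all_rcons h ay'.
  by rewrite all_rcons h ay'.
rewrite ins_rcons_gt // sorted_rcons_all IH //= /ins all_cat /= all_map.
rewrite all_filter (sub_all _ ay) ?andbT; last by move=> z /= hz; apply/implyP; lia.
rewrite all_filter (sub_all _ ay); last by move=> z /= hz; apply/implyP; lia.
lia.
Qed.

Lemma filt_a s i j : i <= j -> [seq y <- [seq y <- s | y <= j] | y <= i] = [seq y <- s | y <= i].
Proof. move=> h; elim: s => //= y s IH; case: (leqP y j) => h1 /=; case: (leqP y i) => h2 /=; rewrite IH //; lia. Qed.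

Ltac T s := let IH := fresh "IH" in elim: s => [|? ? IH] //=; repeat (case: ifP => ? /=); rewrite ?IH //; lia.

Lemma ins_comm s i j : i < j -> ins (ins s j) i = ins (ins s i) j.+1.
Proof.
move=> h; rewrite /ins !filter_cat /= !map_cat /=.
have e1 : (j <= i) = false by lia.
have e2 : (i < j) = true by lia.
have e3 : (i <= j.+1) = true by lia.
have e4 : (j.+1 < i) = false by lia.
rewrite e1 e2 e3 e4 /= -!catA /=.
have -> : [seq y <- [seq y <- s | y <= j] | y <= i] = [seq y <- s | y <= i] by T s.
have -> : [seq y <- [seq y.+1 | y <- s & j < y] | y <= i] = [::] by T s.
have -> : [seq y <- [seq y <- s | y <= i] | y <= j.+1] = [seq y <- s | y <= i] by T s.
have -> : [seq y.+1 | y <- [seq y <- s | y <= i] & j.+1 < y] = [::] by T s.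
have -> : [seq y.+1 | y <- [seq y.+1 | y <- s & j < y] & i < y] = [seq y.+1 | y <- [seq y.+1 | y <- s & i < y] & j.+1 < y] by T s.
have -> : [seq y.+1 | y <- [seq y <- s | y <= j] & i < y] = [seq y <- [seq y.+1 | y <- s & i < y] | y <= j.+1] by T s.
by [].
Qed.


Lemma foldl_ins_ins t s x : sorted leq s ->
  foldl ins t (ins s x) = ins (foldl ins t s) x.
Proof.
elim/last_ind: s => [|s y IH] //.
rewrite sorted_rcons_all => /andP[ss ay].
case: (leqP y x) => h.
  rewrite ins_all ?foldl_rcons //.
  by rewrite all_rcons h; apply: sub_all ay => z /= hz; lia.
rewrite ins_rcons_gt // !foldl_rcons IH //.
by rewrite [RHS]ins_comm.
Qed.

Lemma nf_rcons w x : nf (rcons w x) = ins (nf w) x.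
Proof. by rewrite /nf foldl_rcons. Qed.

Lemma nf_sorted w : sorted leq (nf w).
Proof. elim/last_ind: w => [|w x IH] //; rewrite nf_rcons; exact: ins_sorted. Qed.

Lemma size_nf w : size (nf w) = size w.
Proof. elim/last_ind: w => [|w x IH] //; by rewrite nf_rcons size_ins IH size_rcons. Qed.

Lemma nf_id w : sorted leq w -> nf w = w.
Proof.
elim/last_ind: w => [|w x IH] //; rewrite sorted_rcons_all => /andP[sw aw].
by rewrite nf_rcons IH // ins_all.
Qed.

Lemma nf_catl a b : nf (a ++ b) = nf (nf a ++ b).
Proof. rewrite /nf !foldl_cat; congr foldl; rewrite -/(nf a) -/(nf (nf a)) [RHS]nf_id //; exact: nf_sorted. Qed.

Lemma nf_cat a s : nf (a ++ s) = foldl ins (nf a) s.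
Proof. by rewrite /nf foldl_cat. Qed.

Lemma nf_catr a b : nf (a ++ b) = nf (a ++ nf b).
Proof.
elim/last_ind: b => [|b x IH] //; rewrite -rcons_cat !nf_rcons IH.
by rewrite !nf_cat foldl_ins_ins // nf_sorted.
Qed.

Lemma nf_pair i j : i < j -> nf [:: j; i] = [:: i; j.+1].
Proof.
move=> h; rewrite /nf /= /ins /=.
have -> : (j <= i) = false by lia.
by rewrite h.
Qed.

Lemma nf_pair2 i j : i < j -> nf [:: i; j.+1] = [:: i; j.+1].
Proof. move=> h; apply: nf_id => /=; lia. Qed.

Lemma valid_nil n : valid_mon (n, [::]).
Proof. by []. Qed.

Lemma valid_cons n x w : valid_mon (n, x :: w) = (x <= n)%N && valid_mon (n.+1, w).
Proof.
rewrite /valid_mon /= addn0; congr (_ && _).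
rewrite -(addn0 1%N) iotaDl all_map; apply: eq_all => p /=.
by rewrite add1n addnS addSn.
Qed.

Lemma valid_cat n a b : valid_mon (n, a ++ b) = valid_mon (n, a) && valid_mon (n + size a, b).
Proof.
elim: a n => [|x a IH] n; first by rewrite cat0s /= addn0.
by rewrite cat_cons !valid_cons IH andbA /= addSnnS.
Qed.

Lemma valid_rcons n a x : valid_mon (n, rcons a x) = valid_mon (n, a) && (x <= n + size a)%N.
Proof. by rewrite -cats1 valid_cat valid_cons andbT. Qed.



Local Open Scope fset_scope.
Local Open Scope ring_scope.

Notation monC := (mon : choiceType).

Lemma monoE (k : fieldType) n w (H : valid_mon (n, w)) :
  mono k n w = << (exist _ (n, w) H : mon) >>.
Proof. by rewrite /mono insubT. Qed.

Lemma mono_bad (k : fieldType) n w : ~~ valid_mon (n, w) -> mono k n w = 0.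
Proof. by move=> H; rewrite /mono insubN. Qed.

Lemma mono_val (k : fieldType) (u : mon) : mono k (mon_src u) (mon_word u) = << u >>.
Proof. by case: u => [[n w] H]; rewrite /mon_src /mon_word /= monoE. Qed.


Lemma Uscale (k : fieldType) (c : k) (v : mon) : (<< c *g v >> : Tpar k) = c *: (<< v >> : Tpar k).
Proof.
apply/malgP => u.
rewrite (mcoeffZ c (<<v>> : Tpar k) u).
apply: (etrans (mcoeffU v c u)).
have -> : (<< v >> : Tpar k)@_u = (v == u)%:R by exact: (mcoeffU v 1 u).
by rewrite mulr_natr.
Qed.

Lemma msuppU1' (k : fieldType) (v : mon) : msupp (<< v >> : Tpar k) = [fset v]%fset.
Proof. by have := msuppU v (1 : k); rewrite oner_eq0. Qed.

Lemma msuppU1 (k : fieldType) (v : mon) : msupp (<< v >> : Tpar k) = [fset (v : monC)]%fset.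
Proof. exact: msuppU1'. Qed.

Lemma sum_incl (k : fieldType) (V : zmodType) (p : Tpar k) (d : {fset mon})
  (F : mon -> k -> V) : msupp p `<=` d -> (forall u, F u 0 = 0) ->
  \sum_(u <- msupp p) F u p@_u = \sum_(u <- d) F u p@_u.
Proof.
move=> le F0; rewrite [LHS](big_fset_incl _ le) => //= x xd /mcoeff_outdom ->.
exact: F0.
Qed.

Lemma malg_ind (k : fieldType) (P : Tpar k -> Prop) : P 0 ->
  (forall (c : k) (v : mon) q, P q -> P (c *: << v >> + q)) -> forall p, P p.
Proof.
move=> P0 PS p; rewrite (monalgE p); apply: big_rec => // u q _ Pq.
by rewrite Uscale; apply: PS.
Qed.

Definition lin (k : fieldType) (L : Tpar k -> Tpar k) :=
  forall c p q, L (c *: p + q) = c *: L p + L q.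

Lemma lin0 (k : fieldType) (L : Tpar k -> Tpar k) : lin L -> L 0 = 0.
Proof.
move=> hL; have := hL 1 0 0; rewrite scaler0 addr0 scale1r => h.
by apply: (addrI (L 0)); rewrite addr0 -h.
Qed.

Lemma lin_eq (k : fieldType) (L1 L2 : Tpar k -> Tpar k) : lin L1 -> lin L2 ->
  (forall v, L1 << v >> = L2 << v >>) -> forall p, L1 p = L2 p.
Proof.
move=> h1 h2 e; apply: malg_ind; first by rewrite !lin0.
by move=> c v q IH; rewrite h1 h2 e IH.
Qed.

Lemma linD (k : fieldType) (L : Tpar k -> Tpar k) : lin L -> forall p q, L (p + q) = L p + L q.
Proof. by move=> h p q; have := h 1 p q; rewrite !scale1r. Qed.

Lemma linB (k : fieldType) (L : Tpar k -> Tpar k) : lin L -> forall p q, L (p - q) = L p - L q.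
Proof.
by move=> h p q; have := h (-1) q p; rewrite !scaleN1r addrC [_ + L p]addrC.
Qed.

Lemma linZ (k : fieldType) (L : Tpar k -> Tpar k) : lin L -> forall c p, L (c *: p) = c *: L p.
Proof. by move=> h c p; rewrite -[c *: p]addr0 h lin0 // addr0. Qed.

Lemma cD (k : fieldType) (p q : Tpar k) (v : monC) : (p + q)@_v = p@_v + q@_v.
Proof. exact: mcoeffD. Qed.

Lemma cZ (k : fieldType) (c : k) (p : Tpar k) (v : monC) : (c *: p)@_v = c * p@_v.
Proof. exact: mcoeffZ. Qed.

Lemma cUU (k : fieldType) (u : monC) : (<< u >> : Tpar k)@_u = 1.
Proof. exact: mcoeffUU. Qed.

Lemma TmulEw (k : fieldType) (p q : Tpar k) d1 d2 : msupp p `<=` d1 -> msupp q `<=` d2 ->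
  Tmul p q = \sum_(u <- d1) \sum_(v <- d2) (p@_u * q@_v) *: mon_mul k u v.
Proof.
move=> h1 h2; rewrite /Tmul.
rewrite (sum_incl (F := fun u c => \sum_(v <- msupp q) (c * q@_v) *: mon_mul k u v) h1); last first.
  by move=> u; apply: big1 => v _; rewrite mul0r scale0r.
apply: eq_bigr => u _.
rewrite (sum_incl (F := fun v c => (p@_u * c) *: mon_mul k u v) h2) //.
by move=> v; rewrite mulr0 scale0r.
Qed.

Lemma Tmul_linr (k : fieldType) (a : Tpar k) : lin (Tmul a).
Proof.
move=> c p q; set d := msupp p `|` msupp q.
have hp : msupp p `<=` d by apply: fsubsetUl.
have hq : msupp q `<=` d by apply: fsubsetUr.
have hpq : msupp (c *: p + q) `<=` d.
  apply: fsubset_trans (msuppD_le _ _) _; apply: fsetUSS => //.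
  exact: fsubset_trans (msuppZ_le _ _) _.
rewrite !(TmulEw (fsubset_refl (msupp a)) hp) (TmulEw (fsubset_refl (msupp a)) hq).
rewrite (TmulEw (fsubset_refl (msupp a)) hpq) scaler_sumr -big_split /=.
apply: eq_bigr => u _; rewrite scaler_sumr -big_split /=; apply: eq_bigr => v _.
by rewrite cD cZ mulrDr scalerDl scalerA mulrCA.
Qed.

Lemma Tmul_linl (k : fieldType) (a : Tpar k) : lin (fun p : Tpar k => Tmul p a).
Proof.
move=> c p q; set d := msupp p `|` msupp q.
have hp : msupp p `<=` d by apply: fsubsetUl.
have hq : msupp q `<=` d by apply: fsubsetUr.
have hpq : msupp (c *: p + q) `<=` d.
  apply: fsubset_trans (msuppD_le _ _) _; apply: fsetUSS => //.
  exact: fsubset_trans (msuppZ_le _ _) _.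
rewrite /= !(TmulEw hp (fsubset_refl (msupp a))) (TmulEw hq (fsubset_refl (msupp a))).
rewrite (TmulEw hpq (fsubset_refl (msupp a))) scaler_sumr -big_split /=.
apply: eq_bigr => u _; rewrite scaler_sumr -big_split /=; apply: eq_bigr => v _.
by rewrite cD cZ mulrDl scalerDl scalerA mulrA.
Qed.

Lemma TmulU (k : fieldType) (u v : mon) : Tmul (<< u >> : Tpar k) << v >> = mon_mul k u v.
Proof.
rewrite /Tmul; erewrite (msuppU1' k u); erewrite (msuppU1' k v).
rewrite !big_seq_fset1 !cUU mulr1 scale1r.
reflexivity.
Qed.

Lemma Tmul_mono (k : fieldType) m w n s : valid_mon (m, w) -> valid_mon (n, s) ->
  Tmul (mono k m w) (mono k n s) = if m == (n + size s)%N then mono k n (s ++ w) else 0.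
Proof.
move=> h1 h2; rewrite (monoE _ h1) (monoE _ h2) TmulU /mon_mul.
reflexivity.
Qed.

Lemma IMag_trans (k : fieldType) (a b c : Tpar k) :
  in_IMag (a - b) -> in_IMag (b - c) -> in_IMag (a - c).
Proof. by move=> h1 h2; have := IMag_add h1 h2; rewrite addrA subrK. Qed.

Lemma bubble (k : fieldType) n s x : sorted leq s -> valid_mon (n, rcons s x) ->
  valid_mon (n, ins s x) /\ in_IMag (mono k n (rcons s x) - mono k n (ins s x)).
Proof.
elim/last_ind: s x => [|s y IH] x.
  by move=> _ hv; rewrite /ins /=; split => //; rewrite subrr; exact: IMag_zero.
rewrite sorted_rcons_all => /andP[ss ay] hv.
case: (leqP y x) => h.
  rewrite ins_all; first by split => //; rewrite subrr; exact: IMag_zero.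
  by rewrite all_rcons h; apply: sub_all ay => z /= hz; lia.
rewrite ins_rcons_gt //.
move: hv; rewrite !valid_rcons size_rcons => /andP[/andP[hs hy] hx].
have hv1 : valid_mon (n, rcons s x) by rewrite valid_rcons hs /=; lia.
have [hv2 hI] := IH x ss hv1.
split; first by rewrite hv2 size_ins /=; lia.
have step : mono k n (rcons (rcons s y) x) - mono k n (rcons (rcons s x) y.+1)
    = Tmul (mag_rel k (n + size s) x y) (mono k n s).
  have hw1 : valid_mon (n + size s, [:: y; x]) by rewrite !valid_cons valid_nil /=; lia.
  have hw2 : valid_mon (n + size s, [:: x; y.+1]) by rewrite !valid_cons valid_nil /=; lia.
  by rewrite /mag_rel (linB (Tmul_linl _)) !Tmul_mono // ?eqxx -!cats1 -!catA.
have ctx : mono k n (rcons (rcons s x) y.+1) - mono k n (rcons (ins s x) y.+1)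
    = Tmul (mono k (n + size s).+1 [:: y.+1]) (mono k n (rcons s x) - mono k n (ins s x)).
  have hw : valid_mon ((n + size s).+1, [:: y.+1]) by rewrite valid_cons valid_nil /=; lia.
  by rewrite (linB (Tmul_linr _)) !Tmul_mono // ?size_rcons ?size_ins ?addnS ?eqxx ?cats1.
apply: (IMag_trans (b := mono k n (rcons (rcons s x) y.+1))).
  erewrite step; apply: IMag_mulr; apply: IMag_gen => //; lia.
by erewrite ctx; apply: IMag_mull.
Qed.

Lemma nf_ideal (k : fieldType) n w : valid_mon (n, w) ->
  valid_mon (n, nf w) /\ in_IMag (mono k n w - mono k n (nf w)).
Proof.
elim/last_ind: w => [|w x IH].
  by move=> _; split => //; rewrite subrr; exact: IMag_zero.
rewrite valid_rcons => /andP[hw hx].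
have [hv1 hI] := IH hw.
have hv2 : valid_mon (n, rcons (nf w) x) by rewrite valid_rcons hv1 size_nf.
have [hv3 hI2] := bubble k (nf_sorted w) hv2.
rewrite nf_rcons; split => //.
have hx1 : valid_mon (n + size w, [:: x]) by rewrite valid_cons valid_nil /=; lia.
have ctx : mono k n (rcons w x) - mono k n (rcons (nf w) x)
    = Tmul (mono k (n + size w) [:: x]) (mono k n w - mono k n (nf w)).
  by rewrite (linB (Tmul_linr _)) !Tmul_mono // ?size_nf ?eqxx ?cats1.
apply: (IMag_trans (b := mono k n (rcons (nf w) x))) => //.
by erewrite ctx; apply: IMag_mull.
Qed.

Lemma valid_nf n w : valid_mon (n, w) -> valid_mon (n, nf w).
Proof. by move=> h; case: (nf_ideal (rat : fieldType) h). Qed.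

Definition nfm (k : fieldType) (u : mon) : Tpar k := mono k (mon_src u) (nf (mon_word u)).
Definition NF (k : fieldType) (p : Tpar k) : Tpar k := \sum_(u <- msupp p) p@_u *: nfm k u.

Lemma NFEw (k : fieldType) (p : Tpar k) d : msupp p `<=` d ->
  NF p = \sum_(u <- d) p@_u *: nfm k u.
Proof. by move=> h; rewrite /NF (sum_incl (F := fun u c => c *: nfm k u) h) // => u; rewrite scale0r. Qed.

Lemma NF_lin (k : fieldType) : lin (@NF k).
Proof.
move=> c p q; set d := msupp p `|` msupp q.
have hp : msupp p `<=` d by apply: fsubsetUl.
have hq : msupp q `<=` d by apply: fsubsetUr.
have hpq : msupp (c *: p + q) `<=` d.
  apply: fsubset_trans (msuppD_le _ _) _; apply: fsetUSS => //.
  exact: fsubset_trans (msuppZ_le _ _) _.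
rewrite (NFEw hp) (NFEw hq) (NFEw hpq) scaler_sumr -big_split /=.
by apply: eq_bigr => u _; rewrite cD cZ scalerDl scalerA.
Qed.

Lemma NFU (k : fieldType) (u : mon) : NF (<< u >> : Tpar k) = nfm k u.
Proof. rewrite /NF; erewrite (msuppU1' k u); rewrite big_seq_fset1 cUU scale1r; reflexivity. Qed.

Lemma NF_mono (k : fieldType) n w : valid_mon (n, w) -> NF (mono k n w) = mono k n (nf w).
Proof. by move=> h; rewrite (monoE _ h) NFU. Qed.

Lemma mon_valid (u : mon) : valid_mon (mon_src u, mon_word u).
Proof. by case: u => [[n w] H]. Qed.

Lemma NF_Tmul_r (k : fieldType) (a p : Tpar k) : NF (Tmul a p) = NF (Tmul a (NF p)).
Proof.
move: p; apply: lin_eq.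
- by move=> c p q /=; rewrite (Tmul_linr a c p q) (NF_lin c).
- by move=> c p q /=; rewrite (NF_lin c p q) (Tmul_linr a c) (NF_lin c).
move=> v; move: a; apply: lin_eq.
- by move=> c p q /=; rewrite (Tmul_linl << v >> c p q) (NF_lin c).
- by move=> c p q /=; rewrite (Tmul_linl (NF << v >>) c p q) (NF_lin c).
move=> u; rewrite NFU /nfm -(mono_val k u) -(mono_val k v).
have hu := mon_valid u; have hv := mon_valid v; have hv' := valid_nf hv.
rewrite (Tmul_mono k hu hv) (Tmul_mono k hu hv') size_nf.
case: eqP => hE; last by rewrite lin0 //; exact: NF_lin.
rewrite !NF_mono ?valid_cat ?hv ?hv' ?size_nf -?hE ?hu //.
rewrite -nf_catl; reflexivity.
Qed.

Lemma NF_Tmul_l (k : fieldType) (a p : Tpar k) : NF (Tmul p a) = NF (Tmul (NF p) a).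
Proof.
move: p; apply: lin_eq.
- by move=> c p q /=; rewrite (Tmul_linl a c p q) (NF_lin c).
- by move=> c p q /=; rewrite (NF_lin c p q) (Tmul_linl a c) (NF_lin c).
move=> u; move: a; apply: lin_eq.
- by move=> c p q /=; rewrite (Tmul_linr << u >> c p q) (NF_lin c).
- by move=> c p q /=; rewrite (Tmul_linr (NF << u >>) c p q) (NF_lin c).
move=> v; rewrite NFU /nfm -(mono_val k u) -(mono_val k v).
have hu := mon_valid u; have hv := mon_valid v; have hu' := valid_nf hu.
rewrite (Tmul_mono k hu hv) (Tmul_mono k hu' hv).
case: eqP => hE; last by rewrite lin0 //; exact: NF_lin.
rewrite !NF_mono ?valid_cat ?hv ?hu' ?hu -?hE //.
rewrite -nf_catr; reflexivity.
Qed.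

Lemma NF_ideal0 (k : fieldType) (p : Tpar k) : in_IMag p -> NF p = 0.
Proof.
elim=> {p}.
- move=> n i j hij hjn.
  have h1 : valid_mon (n, [:: j; i]) by rewrite !valid_cons valid_nil /=; lia.
  have h2 : valid_mon (n, [:: i; j.+1]) by rewrite !valid_cons valid_nil /=; lia.
  by rewrite /mag_rel (linB (@NF_lin k)) (NF_mono k h1) (NF_mono k h2) nf_pair // nf_pair2 // subrr.
- exact: lin0 (@NF_lin k).
- by move=> p q _ hp _ hq; rewrite (linD (@NF_lin k)) hp hq addr0.
- by move=> c p _ hp; rewrite (linZ (@NF_lin k)) hp scaler0.
- move=> a p _ hp; rewrite NF_Tmul_r hp (lin0 (Tmul_linr a)).
  exact: lin0 (@NF_lin k).
- move=> p a _ hp; rewrite NF_Tmul_l hp (lin0 (Tmul_linl a)).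
  exact: lin0 (@NF_lin k).
Qed.

Lemma NF_normal (k : fieldType) (q : Tpar k) :
  (forall u, u \in msupp q -> normal_mon u) -> NF q = q.
Proof.
move=> hq; rewrite /NF.
transitivity (\sum_(u <- msupp q) q@_u *: (<< u >> : Tpar k)).
  apply: eq_big_seq => u hu.
  by rewrite /nfm (nf_id (hq u hu)) mono_val; reflexivity.
symmetry; etransitivity; first exact: (monalgE q).
by apply: eq_bigr => u _; exact: Uscale.
Qed.

Lemma normal_nfm (k : fieldType) (u w : mon) : w \in msupp (nfm k u) -> normal_mon w.
Proof.
rewrite /nfm (monoE _ (valid_nf (mon_valid u))).
erewrite (msuppU1' k).
rewrite inE => /eqP ->.
exact: nf_sorted.
Qed.

Lemma NF_is_normal (k : fieldType) (p : Tpar k) u : u \in msupp (NF p) -> normal_mon u.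
Proof.
rewrite /NF; apply: (big_rec (fun x : Tpar k => u \in msupp x -> normal_mon u)).
  by rewrite msupp0 inE.
move=> v x _ IH hu.
have := fsubsetP (msuppD_le _ _) u hu; rewrite inE => /orP[h|h]; last exact: IH.
apply: (normal_nfm (u := v) (k := k)).
exact: (fsubsetP (msuppZ_le _ _) u h).
Qed.

Lemma NF_span (k : fieldType) (p : Tpar k) : in_IMag (p - NF p).
Proof.
move: p; apply: malg_ind.
  by rewrite (lin0 (@NF_lin k)) subrr; exact: IMag_zero.
move=> c v q IH.
have -> : c *: << v >> + q - NF (c *: << v >> + q) =
  c *: (<< v >> - NF << v >>) + (q - NF q).
  by rewrite (NF_lin c) scalerBr opprD addrACA.
apply: IMag_add => //; apply: IMag_scale.
rewrite NFU /nfm -(mono_val k v).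
by case: (nf_ideal k (mon_valid v)).
Qed.

Unset Implicit Arguments.

Theorem proposition1p2 (k : fieldType) :
  Mag_spanned_by_normal k /\ normal_indep_mod_IMag k.
Proof.
split.
  move=> p; exists (NF p); split; first by move=> u; exact: NF_is_normal.
  exact: NF_span.
move=> q hq hI; rewrite -(NF_normal hq); exact: NF_ideal0.
Qed.
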